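(* Let $p_1,\dots,p_{n}$ be the $p$-values of the tested nodes at a given level $l$ of a rooted tree, and fix a node $j$. Let $T_1,\dots,T_t$ be the subtrees rooted at the ancestors of node $j$ (each containing node $j$), let $p^{(-j)}_{T_s}$ be the set of $p$-values of the tested level-$l$ nodes in $T_s$ other than $j$, and define $$\omega_j=1+\sum_{s=1}^t\mathbb{I}\big(p_j>p^{(-j)}_{T_s}\big),$$ where $p_j>p^{(-j)}_{T_s}$ means that $p_j$ exceeds every element of $p^{(-j)}_{T_s}$. Assume $p_j$ is uniformly distributed on $[0,1]$ and independent of all other $p$-values $(p_i)_{i\ne j}$ at level $l$. Let $\mathcal B^{(-j)}$ denote the event that the vector of all other $p$-values $(p_i)_{i\neq j}$ belongs to a given Borel set. Then for every $\alpha\in(0,1)$, $$\mathbb{E}\big[\omega_j\,\mathbb{I}(\mathcal B^{(-j)},\,p_j\le\alpha)\big]\le\frac{\alpha}{1-\alpha}\,\mathbb{E}\big[\omega_j\,\mathbb{I}(\mathcal B^{(-j)},\,p_j>\alpha)\big].$$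
   Context: A subtree rooted at a node consists of that node and all its descendants. The quantity $\omega_j$ counts node $j$ together with each ancestor of $j$ that would be detected if node $j$ were rejected along with all tested level-$l$ nodes with smaller $p$-values. *)

(* Defs.v *)
From HB Require Import structures.
From mathcomp Require Import all_boot all_order all_algebra.
From mathcomp Require Import all_classical all_reals all_analysis.
Set Implicit Arguments. Unset Strict Implicit. Unset Printing Implicit Defensive.
Import Order.TTheory GRing.Theory Num.Theory.
Local Open Scope classical_set_scope.
Local Open Scope ring_scope.

Section Tree.
Variable V : finType.
(* A rooted tree on the finite node set V is given by a parent map:
   [parent v = None] iff v is the root. *)
Variable parent : V -> option V.

Definition up (k : nat) (v : V) : option V := iter k (obind parent) (Some v).

Definition is_rooted_tree (r : V) : Prop :=
  parent r = None /\ forall v, exists k, up k v = Some r.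

Definition ancestor (a v : V) : Prop := exists k, (0 < k)%N /\ up k v = Some a.

Definition in_subtree (a v : V) : Prop := v = a \/ ancestor a v.

Definition tested_level_nodes (r : V) (tested : {set V}) (l : nat) : {set V} :=
  [set v in tested | up l v == Some r].

Definition omega {Omega : Type} {R : realType} (L : {set V})
    (pv : V -> Omega -> R) (j : V) (w : Omega) : R :=
  1 + \sum_(a : V | `[< ancestor a j >])
        (if `[< forall i, i \in L :\ j -> in_subtree a i -> pv i w < pv j w >]
         then 1 else 0).

Definition others_vec {Omega : Type} {R : realType} (L : {set V})
    (pv : V -> Omega -> R) (j : V) (w : Omega) : (#|L :\ j|).-tuple R :=
  [tuple pv (@enum_val V (mem (L :\ j)) i) w | i < #|L :\ j|].
End Tree.

(* Main.v *)
Require Import Defs.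
From HB Require Import structures.
From mathcomp Require Import all_boot all_order all_algebra.
From mathcomp Require Import all_classical all_reals all_analysis.
From mathcomp Require Import measurable_realfun.
Import Order.TTheory GRing.Theory Num.Theory.
Local Open Scope classical_set_scope.
Local Open Scope ring_scope.


Lemma unif_val (R : realType) (A : set R) : measurable A ->
  uniform_prob (@ltr01 R) A = lebesgue_measure (A `&` `[0, 1]%classic).
Proof.
move=> mA; rewrite /uniform_prob integral_uniform_pdf.
rewrite (eq_integral (cst 1%:E)); last first.
  move=> x; rewrite inE => -[_]; rewrite /= in_itv /= => H; rewrite /uniform_pdf H.
  by rewrite subr0 invr1.
by rewrite integral_cst ?mul1e //; apply: measurableI.
Qed.

Lemma unif_le (R : realType) (a : R) : 0 <= a <= 1 ->
  uniform_prob (@ltr01 R) [set x | x <= a] = a%:E.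
Proof.
case/andP=> a0 a1.
rewrite unif_val; last first.
  have -> : [set x | x <= a] = `]-oo, a]%classic.
    by rewrite eqEsubset; split => x /=; rewrite in_itv /=.
  exact: measurable_itv.
have -> : [set x | x <= a] `&` `[0, 1]%classic = `[0, a]%classic.
  rewrite eqEsubset; split => x /=; rewrite !in_itv /=.
    by move=> [xa /andP[-> _]].
  by case/andP=> x0 xa; split => //; rewrite x0 (le_trans xa a1).
by rewrite lebesgue_measure_itv /= lte_fin; case: ltgtP a0 => // [_ _|<- _]; rewrite ?sube0 // subrr.
Qed.

Lemma unif_gt (R : realType) (a : R) : 0 <= a <= 1 ->
  uniform_prob (@ltr01 R) [set x | a < x] = (1 - a)%:E.
Proof.
case/andP=> a0 a1.
rewrite unif_val; last first.
  have -> : [set x | a < x] = `]a, +oo[%classic.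
    by rewrite eqEsubset; split => x /=; rewrite in_itv /= andbT.
  exact: measurable_itv.
have -> : [set x | a < x] `&` `[0, 1]%classic = `]a, 1]%classic.
  rewrite eqEsubset; split => x /=; rewrite !in_itv /=.
    by move=> [xa /andP[_ ->]]; rewrite xa.
  by case/andP=> x0 xa; split => //; rewrite xa (le_trans a0 (ltW x0)).
rewrite lebesgue_measure_itv /= lte_fin.
have [a1'|h] := ltrP a 1; first by rewrite EFinB EFinN.
have -> : a = 1 by apply/eqP; rewrite eq_le a1 h.
by rewrite subrr.
Qed.

Theorem lemma2 (R : realType) (d : measure_display) (Omega : measurableType d)
  (P : probability Omega R)
  (V : finType) (parent : V -> option V) (r : V) (tested : {set V}) (l : nat)
  (pv : V -> {RV P >-> R}) (j : V) (B : set ((#|tested_level_nodes parent r tested l :\ j|).-tuple R))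
  (alpha : R) :
  is_rooted_tree parent r ->
  j \in tested_level_nodes parent r tested l ->
  (* p_j ~ Uniform[0,1] *)
  (forall A : set R, measurable A -> P (pv j @^-1` A) = uniform_prob (@ltr01 R) A) ->
  (* p_j independent of the vector of all other p-values at level l *)
  (forall (A : set R) (C : set ((#|tested_level_nodes parent r tested l :\ j|).-tuple R)),
     measurable A -> measurable C ->
     P (pv j @^-1` A `&` others_vec (tested_level_nodes parent r tested l) (fun i => pv i) j @^-1` C)
     = (P (pv j @^-1` A) * P (others_vec (tested_level_nodes parent r tested l) (fun i => pv i) j @^-1` C))%E) ->
  measurable B ->
  0 < alpha < 1 ->
  let L := tested_level_nodes parent r tested l in
  let om := omega parent L (fun i => pv i) j in
  let Bev := others_vec L (fun i => pv i) j @^-1` B in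
  (\int[P]_w ((om w)%:E * (\1_(Bev `&` [set w | pv j w <= alpha]) w)%:E)
   <= (alpha / (1 - alpha))%:E *
      \int[P]_w ((om w)%:E * (\1_(Bev `&` [set w | pv j w > alpha]) w)%:E))%E.
Proof.
move=> _ _ Hunif Hind mB /andP[a0 a1].
cbv zeta.
set L := tested_level_nodes parent r tested l.
set om := omega parent L (fun i => pv i) j.
set Y := others_vec L (fun i => pv i) j.
have mX : measurable_fun setT (pv j) := measurable_funPT (pv j).
have mXp : forall A, measurable A -> measurable (pv j @^-1` A).
  by move=> A mA; rewrite -[_ @^-1` _]setTI; exact: mX.
have mY : measurable_fun setT Y.
  apply/measurable_fun_tnthP => k.
  rewrite (_ : _ \o _ = pv (enum_val k)); first exact: measurable_funPT.
  by apply/funext => w /=; rewrite tnth_mktuple.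
have mYp : forall C, measurable C -> measurable (Y @^-1` C).
  by move=> C mC; rewrite -[_ @^-1` _]setTI; exact: mY.
pose A1 := [set x : R | x <= alpha].
pose A2 := [set x : R | alpha < x].
have mA1 : measurable A1.
  have -> : A1 = `]-oo, alpha]%classic.
    by rewrite eqEsubset; split => x /=; rewrite in_itv /=.
  exact: measurable_itv.
have mA2 : measurable A2.
  have -> : A2 = `]alpha, +oo[%classic.
    by rewrite eqEsubset; split => x /=; rewrite in_itv /= andbT.
  exact: measurable_itv.
set c := alpha / (1 - alpha).
have c0 : (0 <= c%:E)%E.
  by rewrite lee_fin divr_ge0 ?subr_ge0 ?ltW.
have ratio : forall C, measurable C ->
    P (pv j @^-1` A1 `&` Y @^-1` C) = (c%:E * P (pv j @^-1` A2 `&` Y @^-1` C))%E.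
  move=> C mC; rewrite !Hind // !Hunif // unif_le ?unif_gt ?(ltW a0) ?(ltW a1) //.
  rewrite muleA -EFinM; congr (_ * _)%E; congr EFin.
  by rewrite /c divfK // subr_eq0 gt_eqF.
pose E a := [set w | forall i, i \in L :\ j -> in_subtree parent a i -> pv i w < pv j w].
have mE : forall a, measurable (E a).
  move=> a.
  have -> : E a = \bigcap_(i in [set i | i \in L :\ j /\ in_subtree parent a i])
                   ((fun w => pv i w < pv j w) @^-1` [set true]).
    rewrite eqEsubset; split => w /=.
      by move=> H i [Hi Ha]; apply: H.
    by move=> H i Hi Ha; apply: (H i).
  apply: fin_bigcap_measurable; first exact: finite_finset.
  move=> i _; rewrite -[_ @^-1` _]setTI.
  apply: measurable_fun_ltr => //; exact: measurable_funPT.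
have decomp : forall S : set Omega, measurable S ->
    (\int[P]_w ((om w)%:E * (\1_S w)%:E) =
    P S + (\sum_(a : V | `[< ancestor parent a j >]) P (E a `&` S))%E)%E.
  move=> S mS.
  transitivity (\int[P]_w ((\1_S w)%:E + (\sum_(a : V | `[< ancestor parent a j >]) (\1_(E a `&` S) w)%:E)%E))%E.
    apply: eq_integral => w _.
    rewrite /om /omega sumEFin -EFinD -EFinM; congr EFin.
    rewrite mulrDl mul1r mulr_suml; congr (_ + _); apply: eq_bigr => a _.
    rewrite indicI /=.
    congr (_ * _); rewrite indicE.
    by case: asboolP => h; [rewrite mem_set | rewrite memNset].
  rewrite ge0_integralD //=; last 3 first.
  - exact/measurable_EFinP/measurable_indic.
  - by move=> w _; apply: sume_ge0 => a _; rewrite lee_fin indicE ler0n.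
  - rewrite (_ : (fun x => _) = fun x => \sum_(a <- [seq a <- index_enum V | `[< ancestor parent a j >]]) (\1_(E a `&` S) x)%:E)%E; last first.
      by apply/funext => x; rewrite big_filter.
    apply: emeasurable_sum => a.
    by apply/measurable_EFinP/measurable_indic; apply: measurableI.
  rewrite integral_indic // setIT; congr (_ + _)%E.
  rewrite (eq_integral (fun x => \sum_(a <- [seq a <- index_enum V | `[< ancestor parent a j >]]) (\1_(E a `&` S) x)%:E)%E); last first.
    by move=> x _; rewrite big_filter.
  rewrite ge0_integral_sum //.
  all: try (by move=> a w _; rewrite lee_fin indicE ler0n).
  all: try (by move=> a; apply/measurable_EFinP/measurable_indic; exact: measurableI).
  rewrite big_filter; apply: eq_bigr => a _.
  by rewrite integral_indic // ?setIT //; apply: measurableI.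
pose C a := B `&` \bigcap_(k in [set k : 'I_#|L :\ j| | in_subtree parent a (enum_val k)])
   [set t : #|L :\ j|.-tuple R | tnth t k < alpha].
have mC : forall a, measurable (C a).
  move=> a; apply: measurableI => //.
  apply: fin_bigcap_measurable; first exact: finite_finset.
  move=> k _.
  have -> : [set t : #|L :\ j|.-tuple R | tnth t k < alpha] =
      setT `&` ((fun t : #|L :\ j|.-tuple R => tnth t k) @^-1` `]-oo, alpha[%classic).
    by rewrite setTI; rewrite eqEsubset; split => t /=; rewrite in_itv.
  exact: measurable_tnth.
have mS1 : measurable (Y @^-1` B `&` [set w | pv j w <= alpha]).
  by apply: measurableI; [exact: mYp | exact: (mXp A1 mA1)].
have mS2 : measurable (Y @^-1` B `&` [set w | alpha < pv j w]).
  by apply: measurableI; [exact: mYp | exact: (mXp A2 mA2)].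
rewrite !decomp //.
rewrite ge0_muleDr ?measure_ge0 ?sume_ge0 // ge0_sume_distrr //.
apply: leeD.
  rewrite (setIC (Y @^-1` B)) ratio //; rewrite setIC; exact: lexx.
apply: lee_sum => a _.
apply: (@le_trans _ _ (P (pv j @^-1` A1 `&` Y @^-1` C a))).
  apply: le_measure; rewrite ?inE.
  - exact: measurableI.
  - by apply: measurableI; [exact: mXp | exact: mYp].
  move=> w [Ew [Bw Xw]]; split => //; split => // k /= Hk.
  rewrite tnth_mktuple; apply: (lt_le_trans _ Xw); apply: Ew => //; exact: enum_valP.
rewrite ratio //; apply: lee_pmul => //.
apply: le_measure; rewrite ?inE.
- by apply: measurableI; [exact: mXp | exact: mYp].
- exact: measurableI.
move=> w [Xw [Bw Cw]]; split; last by split.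
move=> i Hi Ha.
have := Cw (enum_rank_in Hi i); rewrite /= tnth_mktuple enum_rankK_in // => /(_ Ha) h.
exact: lt_trans h Xw.
Qed.
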